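(* Let $\Sigma\in\mathbb{R}^{p\times p}$ be positive definite, $X\sim\mathcal{N}_p(0,\Sigma)$, $j\in[p]$ and $S\subset[p]\setminus\{j\}$. If $T_1,T_2\in\mathcal{N}_j(S)$, then $T_1\cup T_2\in\mathcal{N}_j(S)$.
   Context: For $S\subset[p]\setminus\{j\}$, $\beta_j(S)=\arg\min_{\beta\in\mathbb{R}^p,\ \operatorname{supp}(\beta)\subset S}\mathbb{E}[X_j-\beta^TX]^2$ (unique since $\Sigma$ is positive definite), and $\mathcal{N}_j(S)=\{T\subset[p]\setminus\{j\}:\beta_j(T)=\beta_j(S)\}$. *)

(* Defs.v *)
From HB Require Import structures.
From mathcomp Require Import all_boot all_order all_algebra.
From mathcomp Require Import reals.
From Stdlib Require Import ClassicalEpsilon.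
Set Implicit Arguments. Unset Strict Implicit. Unset Printing Implicit Defensive.
Import Order.TTheory GRing.Theory Num.Theory.
Local Open Scope ring_scope.

Definition posdef (R : realType) (p : nat) (Sigma : 'M[R]_p) : Prop :=
  Sigma^T = Sigma /\ forall x : 'cV[R]_p, x != 0 -> 0 < (x^T *m Sigma *m x) 0 0.

Definition supp_in (R : realType) (p : nat) (beta : 'cV[R]_p) (S : {set 'I_p}) : Prop :=
  forall i : 'I_p, i \notin S -> beta i 0 = 0.

(* E[X_j - beta^T X]^2 for X ~ N_p(0, Sigma):
   = (e_j - beta)^T Sigma (e_j - beta). *)
Definition risk (R : realType) (p : nat) (Sigma : 'M[R]_p) (j : 'I_p)
    (beta : 'cV[R]_p) : R :=
  let v := delta_mx j 0 - beta in (v^T *m Sigma *m v) 0 0.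

Definition is_argmin (R : realType) (p : nat) (Sigma : 'M[R]_p) (j : 'I_p)
    (S : {set 'I_p}) (beta : 'cV[R]_p) : Prop :=
  supp_in beta S /\
  forall gamma : 'cV[R]_p, supp_in gamma S -> risk Sigma j beta <= risk Sigma j gamma.

(* beta_j(S): the (unique, for positive definite Sigma) minimizer. *)
Definition beta_j (R : realType) (p : nat) (Sigma : 'M[R]_p) (j : 'I_p)
    (S : {set 'I_p}) : 'cV[R]_p :=
  epsilon (inhabits 0) (is_argmin Sigma j S).

Definition in_N (R : realType) (p : nat) (Sigma : 'M[R]_p) (j : 'I_p)
    (S T : {set 'I_p}) : Prop :=
  j \notin T /\ beta_j Sigma j T = beta_j Sigma j S.

(* Main.v *)
Require Import Defs.
From HB Require Import structures.
From mathcomp Require Import all_boot all_order all_algebra.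
From mathcomp Require Import reals.
From Stdlib Require Import ClassicalEpsilon.
From mathcomp Require Import ring lra.
Set Implicit Arguments. Unset Strict Implicit. Unset Printing Implicit Defensive.
Import Order.TTheory GRing.Theory Num.Theory.
Local Open Scope ring_scope.

Definition FOC (R : realType) (p : nat) (Sigma : 'M[R]_p) (j : 'I_p)
  (T : {set 'I_p}) (b : 'cV[R]_p) : Prop :=
  supp_in b T /\ forall i, i \in T -> (Sigma *m (delta_mx j 0 - b)) i 0 = 0.


Lemma quad_expand (R : realType) (p : nat) (Sigma : 'M[R]_p) (u w : 'cV[R]_p) :
  Sigma^T = Sigma ->
  ((u + w)^T *m Sigma *m (u + w)) 0 0 =
  (u^T *m Sigma *m u) 0 0 + 2 * (w^T *m Sigma *m u) 0 0 + (w^T *m Sigma *m w) 0 0.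
Proof.
move=> hS.
have sym : (u^T *m Sigma *m w) 0 0 = (w^T *m Sigma *m u) 0 0.
  have e : (w^T *m Sigma *m u)^T = u^T *m Sigma *m w.
    by rewrite !trmx_mul trmxK hS mulmxA.
  by rewrite -e mxE.
rewrite mulmxDr (raddfD (@trmx _ _ _) u w) !mulmxDl.
move: sym.
set a := u^T *m Sigma *m u; set b := u^T *m Sigma *m w.
set c := w^T *m Sigma *m u; set d := w^T *m Sigma *m w.
move=> sym.
clearbody a b c d. rewrite !mxE sym; ring.
Qed.

Lemma orth (R : realType) (p : nat) (Sigma : 'M[R]_p) (T : {set 'I_p}) (h v : 'cV[R]_p) :
  supp_in h T -> (forall i, i \in T -> (Sigma *m v) i 0 = 0) ->
  (h^T *m Sigma *m v) 0 0 = 0.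
Proof.
move=> hh hv; rewrite -mulmxA mxE; apply: big1 => k _; rewrite mxE.
by case: (boolP (k \in T)) => kT; [rewrite hv // mulr0 | rewrite hh // mul0r].
Qed.

Lemma quad_ge0 (R : realType) (p : nat) (Sigma : 'M[R]_p) (w : 'cV[R]_p) :
  posdef Sigma -> 0 <= (w^T *m Sigma *m w) 0 0.
Proof.
case=> _ hP; case: (eqVneq w 0) => [->|nz].
  by rewrite mulmx0 mxE.
exact: ltW (hP _ nz).
Qed.

Lemma decomp {R : realType} {p : nat} (j : 'I_p) (g a : 'cV[R]_p) :
  delta_mx j 0 - a = (delta_mx j 0 - g) + (g - a).
Proof. by rewrite addrA subrK. Qed.

Lemma supp_sub (R : realType) (p : nat) (T : {set 'I_p}) (g a : 'cV[R]_p) :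
  supp_in g T -> supp_in a T -> supp_in (g - a) T.
Proof. by move=> hg ha i iT; rewrite !mxE hg // ha // subr0. Qed.

Lemma FOC_argmin (R : realType) (p : nat) (Sigma : 'M[R]_p) (j : 'I_p)
  (T : {set 'I_p}) (g : 'cV[R]_p) :
  posdef Sigma -> FOC Sigma j T g -> is_argmin Sigma j T g.
Proof.
move=> hP [hs hf]; split => // a ha.
rewrite /risk /= [in X in _ <= X](decomp j g a) (@quad_expand _ _ _ (delta_mx j 0 - g) (g - a)); last by case: hP.
rewrite (orth (supp_sub hs ha) hf) mulr0 addr0.
by rewrite lerDl quad_ge0.
Qed.

Lemma argmin_uniq (R : realType) (p : nat) (Sigma : 'M[R]_p) (j : 'I_p)
  (T : {set 'I_p}) (g a : 'cV[R]_p) :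
  posdef Sigma -> FOC Sigma j T g -> is_argmin Sigma j T a -> a = g.
Proof.
move=> hP [hs hf] [ha hm].
have := hm g hs.
rewrite /risk /= [in X in X <= _](decomp j g a) (@quad_expand _ _ _ (delta_mx j 0 - g) (g - a)); last by case: hP.
rewrite (orth (supp_sub hs ha) hf) mulr0 addr0 gerDl => hle.
case: (eqVneq (g - a) 0) => [/subr0_eq -> //| nz].
case: hP => _ /(_ _ nz) hlt.
by move: (lt_le_trans hlt hle); rewrite ltxx.
Qed.

Lemma FOC_exists (R : realType) (p : nat) (Sigma : 'M[R]_p) (j : 'I_p)
  (T : {set 'I_p}) : posdef Sigma -> exists g, FOC Sigma j T g.
Proof.
move=> hP.
pose M : 'M[R]_p := \matrix_(i, k) (if i \in T then (if k \in T then Sigma i k else 0)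
                                   else (i == k)%:R).
pose r : 'cV[R]_p := \col_i (if i \in T then Sigma i j else 0).
have Mu : M \in unitmx.
  rewrite unitmxE unitfE; apply/negP => /det0P [v vnz vM].
  have hk k : \sum_i v 0 i * M i k = 0.
    by have := congr1 (fun A : 'rV[R]_p => A 0 k) vM; rewrite !mxE.
  have s1 k : k \notin T -> v 0 k = 0.
    move=> kT; rewrite -(hk k) (bigD1 k) //= big1 ?addr0.
      by rewrite mxE (negbTE kT) eqxx mulr1.
    move=> i ik; rewrite mxE; case: (i \in T); first by rewrite (negbTE kT) mulr0.
    by rewrite (negbTE ik) mulr0.
  have s2 k : k \in T -> \sum_i v 0 i * Sigma i k = 0.
    move=> kT; rewrite -[RHS](hk k); apply: eq_bigr => i _; rewrite mxE kT.
    by case: (boolP (i \in T)) => iT //; rewrite s1 // !mul0r.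
  have xnz : v^T != 0 by rewrite trmx_eq0.
  case: hP => _ /(_ _ xnz); rewrite trmxK mxE.
  rewrite big1 ?ltxx // => k _; rewrite !mxE.
  case: (boolP (k \in T)) => kT; last by rewrite s1 // mulr0.
  by rewrite s2 // mul0r.
pose g := invmx M *m r.
have Mg : M *m g = r by rewrite /g mulKVmx.
have hi i : \sum_k M i k * g k 0 = r i 0.
  by have := congr1 (fun A : 'cV[R]_p => A i 0) Mg; rewrite !mxE.
clearbody g.
have hs : supp_in g T.
  move=> i iT; have := hi i. rewrite [r i 0]mxE ifN // => h; rewrite -[RHS]h.
  rewrite (bigD1 i) //= big1 ?addr0.
    by rewrite mxE (negbTE iT) eqxx mul1r.
  by move=> k ki; rewrite mxE (negbTE iT) eq_sym (negbTE ki) mul0r.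
exists g; split => // i iT.
rewrite mulmxBr -colE mxE [(col _ _) _ _]mxE.
have := hi i; rewrite [r i 0]mxE iT => <-.
rewrite [X in _ + X]mxE; apply/eqP; rewrite subr_eq0 mxE; apply/eqP; apply: eq_bigr => k _; rewrite mxE iT.
by case: (boolP (k \in T)) => kT //; rewrite hs // !mulr0.
Qed.

Lemma beta_FOC (R : realType) (p : nat) (Sigma : 'M[R]_p) (j : 'I_p)
  (T : {set 'I_p}) : posdef Sigma -> FOC Sigma j T (beta_j Sigma j T).
Proof.
move=> hP; have [g hg] := FOC_exists j T hP.
have hm : is_argmin Sigma j T (beta_j Sigma j T).
  by apply: epsilon_spec; exists g; exact: FOC_argmin.
by rewrite (argmin_uniq hP hg hm).
Qed.

Lemma FOC_beta (R : realType) (p : nat) (Sigma : 'M[R]_p) (j : 'I_p)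
  (T : {set 'I_p}) b : posdef Sigma -> FOC Sigma j T b -> beta_j Sigma j T = b.
Proof.
move=> hP hb.
have hm : is_argmin Sigma j T (beta_j Sigma j T).
  by apply: epsilon_spec; exists b; exact: FOC_argmin.
exact: argmin_uniq hP hb hm.
Qed.

Theorem lemma5 (R : realType) (p : nat) (Sigma : 'M[R]_p) (j : 'I_p)
    (S T1 T2 : {set 'I_p}) :
  posdef Sigma -> j \notin S ->
  in_N Sigma j S T1 -> in_N Sigma j S T2 -> in_N Sigma j S (T1 :|: T2).
Proof.
move=> hP _ [j1 e1] [j2 e2]; split.
  by rewrite in_setU negb_or j1 j2.
have [s1 f1] := beta_FOC j T1 hP; have [s2 f2] := beta_FOC j T2 hP.
rewrite e1 in s1 f1; rewrite e2 in s2 f2.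
apply: FOC_beta => //; split.
  by move=> i; rewrite in_setU negb_or => /andP [h _]; exact: s1.
by move=> i; rewrite in_setU => /orP [h|h]; [exact: f1 | exact: f2].
Qed.
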